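(* (i) For any $\Gamma\cup\{A\}\subseteq\mathcal{L}_\infty$, if $\Gamma\vdash_{\mathbf{GL}_h}A$ then $\Gamma^f\vdash_{\mathbf{GL}}A^f$. (ii) For any set $\Gamma\cup\{A\}$ of formulas of the ordinary unimodal language $\mathcal{L}_\Box$ and any witnesses $v$ for $\Gamma$ and $w$ for $A$, if $\Gamma\vdash_{\mathbf{GL}}A$ then $\Gamma(v)\vdash_{\mathbf{GL}_h}A(w)$.
   Context: The language $\mathcal{L}_\infty$ consists of modal formulas built from propositional atoms, $\bot,\top$, the connectives $\neg,\wedge,\vee,\rightarrow$ and unary modalities $\Box_n$ ($n\in\mathbb{N}$), with the restriction that $\Box_n A$ is a formula only if $n$ is strictly greater than the index of every box occurring in $A$. Axiom instances are only those that are $\mathcal{L}_\infty$-formulas. Axiom schemes (for all $n\ge0$): $\mathbf{H}$: $\Box_n A\rightarrow\Box_{n+1}A$; $\mathbf{K}_h$: $\Box_n(A\rightarrow B)\rightarrow(\Box_nA\rightarrow\Box_nB)$; $\mathbf{4}_h$: $\Box_nA\rightarrow\Box_{n+1}\Box_nA$; $\mathbf{L}_h$: $\Box_{n+1}(\Box_nA\rightarrow A)\rightarrow\Box_nA$. $\mathbf{GL}_h$ is the least set of $\mathcal{L}_\infty$-formulas containing all classical propositional tautologies and all instances of $\mathbf{H},\mathbf{K}_h,\mathbf{4}_h,\mathbf{L}_h$, closed under modus ponens and the rule: from $A$ infer $\Box_nA$ for any $n$ greater than all box indices in $A$. $\mathbf{GL}$ is the usual Gödel–Löb provability logic in $\mathcal{L}_\Box$,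 the usual modal language with one modality $\Box$. For a logic $L$ and a set $\Gamma$, $\Gamma\vdash_LA$ means $\bigwedge\Delta\rightarrow A\in L$ for some finite $\Delta\subseteq\Gamma$. The forgetful translation $f:\mathcal{L}_\infty\to\mathcal{L}_\Box$ fixes atoms, commutes with the connectives and sends every $\Box_n$ to $\Box$; $\Gamma^f=\{B^f:B\in\Gamma\}$. A witness for $A\in\mathcal{L}_\Box$ is an assignment of a natural number to each occurrence of $\Box$ in $A$ such that the number assigned to each occurrence is strictly greater than the numbers assigned to all box occurrences inside its scope. For a witness $w$ of $A$, $A(w)\in\mathcal{L}_\infty$ is obtained by replacing each occurrence of $\Box$ by $\Box_n$ with $n$ its assigned number. A witness $v$ for a set $\Gamma$ is a family assigning a witness $v_B$ to each $B\in\Gamma$, and $\Gamma(v)=\{B(v_B):B\in\Gamma\}$. *)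

(* Defs.v *)
From Stdlib Require Import List Arith.
Import ListNotations.

Inductive form : Type :=
| FAtom : nat -> form
| FBot : form
| FTop : form
| FNeg : form -> form
| FAnd : form -> form -> form
| FOr : form -> form -> form
| FImp : form -> form -> form
| FBox : form -> form.

(* Raw syntax with indexed boxes; L_infty = the well-formed ones (hwf). *)
Inductive hform : Type :=
| HAtom : nat -> hform
| HBot : hform
| HTop : hform
| HNeg : hform -> hform
| HAnd : hform -> hform -> hform
| HOr : hform -> hform -> hform
| HImp : hform -> hform -> hform
| HBox : nat -> hform -> hform.

Fixpoint boxes_below (n : nat) (A : hform) : Prop :=
  match A with
  | HAtom _ | HBot | HTop => True
  | HNeg B => boxes_below n B
  | HAnd B C | HOr B C | HImp B C => boxes_below n B /\ boxes_below n C
  | HBox m B => m < n /\ boxes_below n B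
  end.

Fixpoint hwf (A : hform) : Prop :=
  match A with
  | HAtom _ | HBot | HTop => True
  | HNeg B => hwf B
  | HAnd B C | HOr B C | HImp B C => hwf B /\ hwf C
  | HBox m B => boxes_below m B /\ hwf B
  end.

(* Classical propositional tautologies: true under every valuation treating
   atoms and boxed formulas as propositional variables. *)
Fixpoint feval (va : nat -> bool) (vb : form -> bool) (A : form) : bool :=
  match A with
  | FAtom p => va p
  | FBot => false
  | FTop => true
  | FNeg B => negb (feval va vb B)
  | FAnd B C => feval va vb B && feval va vb C
  | FOr B C => feval va vb B || feval va vb C
  | FImp B C => implb (feval va vb B) (feval va vb C)
  | FBox B => vb B
  end.

Definition ftaut (A : form) : Prop :=
  forall va vb, feval va vb A = true.

Fixpoint heval (va : nat -> bool) (vb : nat -> hform -> bool) (A : hform) : bool :=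
  match A with
  | HAtom p => va p
  | HBot => false
  | HTop => true
  | HNeg B => negb (heval va vb B)
  | HAnd B C => heval va vb B && heval va vb C
  | HOr B C => heval va vb B || heval va vb C
  | HImp B C => implb (heval va vb B) (heval va vb C)
  | HBox n B => vb n B
  end.

Definition htaut (A : hform) : Prop :=
  forall va vb, heval va vb A = true.

Inductive GL : form -> Prop :=
| GL_taut : forall A, ftaut A -> GL A
| GL_K : forall A B, GL (FImp (FBox (FImp A B)) (FImp (FBox A) (FBox B)))
| GL_4 : forall A, GL (FImp (FBox A) (FBox (FBox A)))
| GL_L : forall A, GL (FImp (FBox (FImp (FBox A) A)) (FBox A))
| GL_MP : forall A B, GL A -> GL (FImp A B) -> GL B
| GL_Nec : forall A, GL A -> GL (FBox A).

(* The logic GL_h; axiom instances are only the L_infty formulas. *)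
Inductive GLh : hform -> Prop :=
| GLh_taut : forall A, hwf A -> htaut A -> GLh A
| GLh_H : forall n A, hwf (HImp (HBox n A) (HBox (S n) A)) ->
    GLh (HImp (HBox n A) (HBox (S n) A))
| GLh_K : forall n A B,
    hwf (HImp (HBox n (HImp A B)) (HImp (HBox n A) (HBox n B))) ->
    GLh (HImp (HBox n (HImp A B)) (HImp (HBox n A) (HBox n B)))
| GLh_4 : forall n A, hwf (HImp (HBox n A) (HBox (S n) (HBox n A))) ->
    GLh (HImp (HBox n A) (HBox (S n) (HBox n A)))
| GLh_L : forall n A, hwf (HImp (HBox (S n) (HImp (HBox n A) A)) (HBox n A)) ->
    GLh (HImp (HBox (S n) (HImp (HBox n A) A)) (HBox n A))
| GLh_MP : forall A B, GLh A -> GLh (HImp A B) -> GLh B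
| GLh_Nec : forall n A, GLh A -> boxes_below n A -> GLh (HBox n A).

(* Derivability from a set of premises: /\Delta -> A in L for finite Delta <= Gamma
   (empty conjunction = Top). *)
Definition fconj (D : list form) : form := fold_right FAnd FTop D.
Definition hconj (D : list hform) : hform := fold_right HAnd HTop D.

Definition GL_derives (Gamma : form -> Prop) (A : form) : Prop :=
  exists D : list form, (forall B, In B D -> Gamma B) /\ GL (FImp (fconj D) A).

Definition GLh_derives (Gamma : hform -> Prop) (A : hform) : Prop :=
  exists D : list hform, (forall B, In B D -> Gamma B) /\ GLh (HImp (hconj D) A).

Fixpoint forget (A : hform) : form :=
  match A with
  | HAtom p => FAtom p
  | HBot => FBot
  | HTop => FTop
  | HNeg B => FNeg (forget B)
  | HAnd B C => FAnd (forget B) (forget C)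
  | HOr B C => FOr (forget B) (forget C)
  | HImp B C => FImp (forget B) (forget C)
  | HBox _ B => FBox (forget B)
  end.

Definition forget_set (Gamma : hform -> Prop) : form -> Prop :=
  fun C => exists B, Gamma B /\ forget B = C.

(* A witness for A (an assignment of numbers to the box occurrences of A,
   strictly decreasing into scopes) is represented by the labelled formula
   A(w) itself: an hform whose boxes carry the assigned numbers, whose
   forgetful image is A, and which satisfies the scope condition (hwf). *)
Definition is_witness (A : form) (Aw : hform) : Prop :=
  forget Aw = A /\ hwf Aw.

(* A witness v for a set Gamma: a witness v B for every B in Gamma;
   Gamma(v) = { B(v_B) : B in Gamma }. *)
Definition is_set_witness (Gamma : form -> Prop) (v : form -> hform) : Prop :=
  forall B, Gamma B -> is_witness B (v B).

Definition apply_set_witness (Gamma : form -> Prop) (v : form -> hform) : hform -> Prop :=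
  fun H => exists B, Gamma B /\ H = v B.

(* Main.v *)
Require Import Defs.
From Stdlib Require Import List Arith Lia.
Import ListNotations.

Fixpoint rank (A : form) : nat :=
  match A with
  | FAtom _ | FBot | FTop => 0
  | FNeg B => rank B
  | FAnd B C | FOr B C | FImp B C => Nat.max (rank B) (rank C)
  | FBox B => S (rank B)
  end.

Fixpoint can (A : form) : hform :=
  match A with
  | FAtom p => HAtom p
  | FBot => HBot
  | FTop => HTop
  | FNeg B => HNeg (can B)
  | FAnd B C => HAnd (can B) (can C)
  | FOr B C => HOr (can B) (can C)
  | FImp B C => HImp (can B) (can C)
  | FBox B => HBox (rank B) (can B)
  end.

Lemma bb_mono : forall X n m, boxes_below n X -> n <= m -> boxes_below m X.
Proof. induction X; simpl; intuition (eauto; try lia). Qed.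

Lemma can_bb : forall A n, rank A <= n -> boxes_below n (can A).
Proof.
  induction A; simpl; intros; try split; auto; try (apply IHA1 || apply IHA2); try lia.
  apply IHA; lia.
Qed.

Lemma can_hwf : forall A, hwf (can A).
Proof. induction A; simpl; auto. split; auto. apply can_bb; lia. Qed.

Lemma rank_le : forall X n, hwf X -> boxes_below n X -> rank (forget X) <= n.
Proof.
  induction X; simpl; intros; intuition; try lia;
  try (apply Nat.max_lub; auto).
  assert (rank (forget X) <= n) by auto. lia.
Qed.

Lemma heval_can : forall va vb A,
  heval va vb (can A) = feval va (fun C => vb (rank C) (can C)) A.
Proof. induction A; simpl; congruence. Qed.

Lemma taut_can : forall A, ftaut A -> htaut (can A).
Proof. intros A H va vb. rewrite heval_can. apply H. Qed.

Ltac hw := simpl; repeat split; try assumption; try lia;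
  try (eapply bb_mono; [eassumption | lia]); try apply can_hwf;
  try (apply can_bb; lia).

Ltac tt := intros va vb; simpl;
  repeat match goal with
  | |- context [heval ?a ?b ?X] => destruct (heval a b X)
  | |- context [vb ?n ?X] => destruct (vb n X)
  end; reflexivity.

Lemma imp_trans : forall X Y Z, hwf X -> hwf Y -> hwf Z ->
  GLh (HImp X Y) -> GLh (HImp Y Z) -> GLh (HImp X Z).
Proof.
  intros X Y Z hX hY hZ H1 H2.
  apply (GLh_MP _ _ H2). apply (GLh_MP _ _ H1).
  apply GLh_taut; [hw | tt].
Qed.

Lemma imp_id : forall X, hwf X -> GLh (HImp X X).
Proof. intros. apply GLh_taut; [hw | tt]. Qed.

Lemma box_mono : forall n X Y, hwf X -> hwf Y -> boxes_below n X -> boxes_below n Y ->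
  GLh (HImp X Y) -> GLh (HImp (HBox n X) (HBox n Y)).
Proof.
  intros n X Y hX hY bX bY H.
  apply (GLh_MP (HBox n (HImp X Y))).
  - apply GLh_Nec; auto. hw.
  - apply GLh_K. hw.
Qed.

Lemma down_step : forall m X, hwf X -> boxes_below m X ->
  GLh (HImp (HBox (S m) X) (HBox m X)).
Proof.
  intros m X hX bX.
  apply imp_trans with (HBox (S m) (HImp (HBox m X) X)); try hw.
  - apply box_mono; try hw.
    apply GLh_taut; [hw | tt].
  - apply GLh_L. hw.
Qed.

Lemma up : forall m k X, k <= m -> hwf X -> boxes_below k X ->
  GLh (HImp (HBox k X) (HBox m X)).
Proof.
  induction m; intros k X Hk hX bX.
  - replace k with 0 by lia. apply imp_id. hw.
  - destruct (Nat.eq_dec k (S m)) as [->|Hne]. apply imp_id; hw.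
    apply imp_trans with (HBox m X); try hw.
    + apply IHm; auto; lia.
    + apply GLh_H. hw.
Qed.

Lemma down : forall m k X, k <= m -> hwf X -> boxes_below k X ->
  GLh (HImp (HBox m X) (HBox k X)).
Proof.
  induction m; intros k X Hk hX bX.
  - replace k with 0 by lia. apply imp_id. hw.
  - destruct (Nat.eq_dec k (S m)) as [->|Hne]. apply imp_id; hw.
    apply imp_trans with (HBox m X); try hw.
    + apply down_step; auto. hw.
    + apply IHm; auto; lia.
Qed.

Lemma K1 : forall A, GL A -> GLh (can A).
Proof.
  intros A H; induction H.
  - apply GLh_taut. apply can_hwf. apply taut_can; auto.
  - simpl. set (m := Nat.max (rank A) (rank B)).
    assert (hA := can_hwf A). assert (hB := can_hwf B).
    assert (a : GLh (HImp (HBox m (HImp (can A) (can B)))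
                (HImp (HBox m (can A)) (HBox m (can B))))).
    { apply GLh_K. hw; apply can_bb; unfold m; lia. }
    assert (b : GLh (HImp (HBox (rank A) (can A)) (HBox m (can A)))).
    { apply up; auto. unfold m; lia. hw. }
    assert (c : GLh (HImp (HBox m (can B)) (HBox (rank B) (can B)))).
    { apply down; auto. unfold m; lia. hw. }
    apply (GLh_MP _ _ c). apply (GLh_MP _ _ b). apply (GLh_MP _ _ a).
    apply GLh_taut; [hw; apply can_bb; unfold m; lia | tt].
  - simpl. apply GLh_4. hw.
  - change (GLh (HImp (HBox (Nat.max (S (rank A)) (rank A)) (HImp (HBox (rank A) (can A)) (can A))) (HBox (rank A) (can A)))).
    replace (Nat.max (S (rank A)) (rank A)) with (S (rank A)) by lia.
    apply GLh_L. assert (h := can_hwf A). hw.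
  - apply (GLh_MP _ _ IHGL1 IHGL2).
  - simpl. apply GLh_Nec; auto. hw.
Qed.

Lemma K2 : forall X, hwf X ->
  GLh (HImp X (can (forget X))) /\ GLh (HImp (can (forget X)) X).
Proof.
  induction X; simpl; intros hX.
  - split; apply imp_id; hw.
  - split; apply imp_id; hw.
  - split; apply imp_id; hw.
  - destruct (IHX hX) as [a b]. assert (hc := can_hwf (forget X)).
    split.
    + apply (GLh_MP _ _ b). apply GLh_taut; [hw | tt].
    + apply (GLh_MP _ _ a). apply GLh_taut; [hw | tt].
  - destruct hX as [h1 h2].
    destruct (IHX1 h1) as [a1 b1]; destruct (IHX2 h2) as [a2 b2].
    assert (c1 := can_hwf (forget X1)); assert (c2 := can_hwf (forget X2)).
    split.
    + apply (GLh_MP _ _ a2). apply (GLh_MP _ _ a1). apply GLh_taut; [hw | tt].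
    + apply (GLh_MP _ _ b2). apply (GLh_MP _ _ b1). apply GLh_taut; [hw | tt].
  - destruct hX as [h1 h2].
    destruct (IHX1 h1) as [a1 b1]; destruct (IHX2 h2) as [a2 b2].
    assert (c1 := can_hwf (forget X1)); assert (c2 := can_hwf (forget X2)).
    split.
    + apply (GLh_MP _ _ a2). apply (GLh_MP _ _ a1). apply GLh_taut; [hw | tt].
    + apply (GLh_MP _ _ b2). apply (GLh_MP _ _ b1). apply GLh_taut; [hw | tt].
  - destruct hX as [h1 h2].
    destruct (IHX1 h1) as [a1 b1]; destruct (IHX2 h2) as [a2 b2].
    assert (c1 := can_hwf (forget X1)); assert (c2 := can_hwf (forget X2)).
    split.
    + apply (GLh_MP _ _ a2). apply (GLh_MP _ _ b1). apply GLh_taut; [hw | tt].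
    + apply (GLh_MP _ _ b2). apply (GLh_MP _ _ a1). apply GLh_taut; [hw | tt].
  - destruct hX as [bX h]. destruct (IHX h) as [a b].
    assert (c := can_hwf (forget X)).
    assert (r := rank_le X n h bX).
    assert (bc : boxes_below n (can (forget X))) by (apply can_bb; lia).
    split.
    + apply imp_trans with (HBox n (can (forget X))); try hw.
      * apply box_mono; auto.
      * apply down; auto. apply can_bb; lia.
    + apply imp_trans with (HBox n (can (forget X))); try hw.
      * apply up; auto. apply can_bb; lia.
      * apply box_mono; auto.
Qed.

Lemma htaut_ftaut : forall A, htaut A -> ftaut (forget A).
Proof.
  intros A H va vb. specialize (H va (fun _ B => vb (forget B))).
  rewrite <- H. clear H. induction A; simpl; congruence.
Qed.

Lemma part1 : forall A, GLh A -> GL (forget A).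
Proof.
  intros A H; induction H; simpl.
  - apply GL_taut. apply htaut_ftaut; auto.
  - apply GL_taut. intros va vb. simpl. destruct (vb (forget A)); reflexivity.
  - apply GL_K.
  - apply GL_4.
  - apply GL_L.
  - exact (GL_MP _ _ IHGLh1 IHGLh2).
  - apply GL_Nec; auto.
Qed.

Lemma forget_hconj : forall D, forget (hconj D) = fconj (map forget D).
Proof. induction D; simpl; congruence. Qed.

Theorem theorem3p13 :
  (forall (Gamma : hform -> Prop) (A : hform),
      (forall B, Gamma B -> hwf B) -> hwf A ->
      GLh_derives Gamma A -> GL_derives (forget_set Gamma) (forget A))
  /\
  (forall (Gamma : form -> Prop) (A : form) (v : form -> hform) (Aw : hform),
      is_set_witness Gamma v -> is_witness A Aw ->
      GL_derives Gamma A -> GLh_derives (apply_set_witness Gamma v) Aw).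
Proof.
  split.
  - intros Gamma A _ _ [D [HD HG]].
    exists (map forget D). split.
    + intros B HB. apply in_map_iff in HB. destruct HB as [x [<- Hx]].
      exists x; auto.
    + rewrite <- forget_hconj. exact (part1 _ HG).
  - intros Gamma A v Aw Hv [HAf HAw] [D [HD HG]].
    exists (map v D). split.
    + intros B HB. apply in_map_iff in HB. destruct HB as [x [<- Hx]].
      exists x; auto.
    + assert (Hc : forget (hconj (map v D)) = fconj D /\ hwf (hconj (map v D))).
      { clear HG. induction D as [|x D IH]; simpl. split; auto.
        destruct IH as [e w]. intros; apply HD; simpl; auto.
        destruct (Hv x (HD x (or_introl eq_refl))) as [e1 w1].
        split; [congruence | auto]. }
      destruct Hc as [e w].
      assert (k := K1 _ HG). simpl in k.
      destruct (K2 _ w) as [a _]. destruct (K2 _ HAw) as [_ b].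
      rewrite e in a. rewrite HAf in b.
      apply imp_trans with (can (fconj D)); auto; try apply can_hwf.
      apply imp_trans with (can A); auto; apply can_hwf.
Qed.
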